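(* Let $\alpha\ge1$, integers $k_1,k_2\ge0$, $n\ge1$, $k=k_1+k_2$. For every integer $i$ with $1\le i\le n$, $$\frac{k!}{k_1!\,k_2!}\,(k_1+n+1-i)^{\alpha(k_1+n+1-i)}\,(k_2+i)^{\alpha(k_2+i)}\ \le\ 4^{-(\alpha-1)\min(k_1+1,\,k_2+1)}\,(k+n+1)^{\alpha(k+n+1)}.$$
   Context: Convention $0^0=1$. *)

(* Defs.v *)
From Stdlib Require Import Reals Lra Lia Arith Factorial.
Open Scope R_scope.

(* Main.v *)
Require Import Defs.
From Stdlib Require Import Reals Arith Factorial Lra Lia.
Open Scope R_scope.

Lemma C_pos n k : 0 < C n k.
Proof.
  unfold C. apply Rdiv_lt_0_compat. apply lt_0_INR, lt_O_fact.
  apply Rmult_lt_0_compat; apply lt_0_INR, lt_O_fact.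
Qed.

Lemma C_nn n : C n n = 1.
Proof. unfold C. rewrite Nat.sub_diag. simpl. field. apply not_0_INR, fact_neq_0. Qed.

Lemma C_n0 n : C n 0 = 1.
Proof. unfold C. rewrite Nat.sub_0_r. simpl. field. apply not_0_INR, fact_neq_0. Qed.

Lemma C_SS n k : (k <= n)%nat -> C n k <= C (S n) (S k).
Proof.
  intros H. destruct (Nat.eq_dec k n) as [->|Hne].
  - rewrite !C_nn. lra.
  - rewrite <- pascal by lia. pose proof (C_pos n (S k)). lra.
Qed.

Lemma C_S n k : (k <= n)%nat -> C n k <= C (S n) k.
Proof.
  intros H. destruct k as [|k].
  - rewrite !C_n0. lra.
  - rewrite <- pascal by lia. pose proof (C_pos n k). lra.
Qed.

Lemma C_mono_e n k e : (k <= n)%nat -> C n k <= C (n + e) k.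
Proof.
  intros H. induction e as [|e IH].
  - rewrite Nat.add_0_r. lra.
  - replace (n + S e)%nat with (S (n + e)) by lia.
    eapply Rle_trans; [exact IH|]. apply C_S. lia.
Qed.

Lemma C_mono n k d e : (k <= n)%nat -> C n k <= C (n + d + e) (k + d).
Proof.
  intros H. induction d as [|d IH].
  - rewrite !Nat.add_0_r. apply C_mono_e; auto.
  - replace (n + S d + e)%nat with (S (n + d + e)) by lia.
    replace (k + S d)%nat with (S (k + d)) by lia.
    eapply Rle_trans; [exact IH|]. apply C_SS. lia.
Qed.

Lemma sum_ge_term f N t : (t <= N)%nat -> (forall j, 0 <= f j) -> f t <= sum_f_R0 f N.
Proof.
  intros Ht Hf. induction N as [|N IH].
  - replace t with 0%nat by lia. simpl. lra.
  - simpl. destruct (Nat.eq_dec t (S N)) as [->|Hne].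
    + assert (0 <= sum_f_R0 f N). { apply cond_pos_sum; auto. } lra.
    + specialize (IH ltac:(lia)). specialize (Hf (S N)). lra.
Qed.

Lemma bin_bound a b : C (a + b) a * INR a ^ a * INR b ^ b <= INR (a + b) ^ (a + b).
Proof.
  rewrite plus_INR, binomial.
  replace (INR b ^ b) with (INR b ^ (a + b - a)) by (f_equal; lia).
  apply (sum_ge_term (fun i => C (a + b) i * INR a ^ i * INR b ^ (a + b - i))).
  - lia.
  - intros j. pose proof (C_pos (a+b) j). pose proof (pos_INR a). pose proof (pos_INR b).
    apply Rmult_le_pos; [apply Rmult_le_pos|]; try lra; apply pow_le; lra.
Qed.

Lemma four_bound a b m : (m <= a)%nat -> (m <= b)%nat ->
  4 ^ m * (INR a ^ a * INR b ^ b) <= INR (a + b) ^ (a + b).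
Proof.
  intros Ha Hb.
  pose proof (pos_INR a). pose proof (pos_INR b).
  replace (a + b)%nat with (m + m + (a - m) + (b - m))%nat at 2 by lia.
  rewrite plus_INR.
  replace (INR a ^ a) with (INR a ^ m * INR a ^ (a - m)) by (rewrite <- pow_add; f_equal; lia).
  replace (INR b ^ b) with (INR b ^ m * INR b ^ (b - m)) by (rewrite <- pow_add; f_equal; lia).
  replace ((INR a + INR b) ^ (m + m + (a - m) + (b - m)))
    with (((INR a + INR b) ^ 2) ^ m * (INR a + INR b) ^ (a - m) * (INR a + INR b) ^ (b - m))
    by (rewrite <- pow_mult, <- !pow_add; f_equal; lia).
  assert (H1: 4 ^ m * (INR a ^ m * INR b ^ m) <= ((INR a + INR b) ^ 2) ^ m).
  { rewrite <- !Rpow_mult_distr. apply pow_incr. split.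
    - apply Rmult_le_pos; [lra|]. apply Rmult_le_pos; lra.
    - simpl. pose proof (Rle_0_sqr (INR a - INR b)). unfold Rsqr in *. nra. }
  assert (H2: INR a ^ (a - m) <= (INR a + INR b) ^ (a - m)) by (apply pow_incr; lra).
  assert (H3: INR b ^ (b - m) <= (INR a + INR b) ^ (b - m)) by (apply pow_incr; lra).
  assert (0 <= INR a ^ (a - m)) by (apply pow_le; lra).
  assert (0 <= INR b ^ (b - m)) by (apply pow_le; lra).
  assert (0 <= 4 ^ m * (INR a ^ m * INR b ^ m)).
  { apply Rmult_le_pos. apply pow_le; lra. apply Rmult_le_pos; apply pow_le; lra. }
  replace (4 ^ m * (INR a ^ m * INR a ^ (a - m) * (INR b ^ m * INR b ^ (b - m))))
    with (4 ^ m * (INR a ^ m * INR b ^ m) * INR a ^ (a - m) * INR b ^ (b - m)) by ring.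
  apply Rmult_le_compat; try assumption.
  - apply Rmult_le_pos; assumption.
  - apply Rmult_le_compat; assumption.
Qed.

Lemma real_main (Cc P M q alpha : R) : 0 < Cc -> 0 < P -> 0 < q -> 1 <= alpha ->
  Cc * P <= M -> q * P <= M ->
  Cc * Rpower P alpha <= Rpower q (- (alpha - 1)) * Rpower M alpha.
Proof.
  intros HC HP Hq Ha H1 H2.
  assert (HM: 0 < M) by nra.
  assert (EP: Rpower P alpha = P * Rpower P (alpha - 1)).
  { replace alpha with (1 + (alpha - 1)) at 1 by ring. rewrite Rpower_plus, Rpower_1 by lra. reflexivity. }
  assert (EM: Rpower M alpha = M * Rpower M (alpha - 1)).
  { replace alpha with (1 + (alpha - 1)) at 1 by ring. rewrite Rpower_plus, Rpower_1 by lra. reflexivity. }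
  rewrite EP, EM.
  assert (H3: Rpower P (alpha - 1) <= Rpower (M * / q) (alpha - 1)).
  { apply Rle_Rpower_l. lra. split; auto.
    apply (Rmult_le_reg_l q); auto. field_simplify; lra. }
  rewrite <- Rpower_mult_distr in H3 by (try apply Rinv_0_lt_compat; lra).
  assert (Rpower (/ q) (alpha - 1) = Rpower q (- (alpha - 1))).
  { rewrite Rpower_Ropp. unfold Rpower. rewrite ln_Rinv by lra.
    rewrite <- exp_Ropp. f_equal. ring. }
  rewrite H in H3.
  assert (0 <= Rpower P (alpha - 1)) by (unfold Rpower; left; apply exp_pos).
  replace (Rpower q (- (alpha - 1)) * (M * Rpower M (alpha - 1)))
    with (M * (Rpower M (alpha - 1) * Rpower q (- (alpha - 1)))) by ring.
  rewrite <- Rmult_assoc. apply Rmult_le_compat; try lra.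
  apply Rmult_le_pos; lra.
Qed.

Theorem corollaryA2 (alpha : R) (k1 k2 n i : nat) :
  1 <= alpha -> (1 <= n)%nat -> (1 <= i)%nat -> (i <= n)%nat ->
  INR (fact (k1 + k2)) / (INR (fact k1) * INR (fact k2))
    * Rpower (INR (k1 + n + 1 - i)) (alpha * INR (k1 + n + 1 - i))
    * Rpower (INR (k2 + i)) (alpha * INR (k2 + i))
  <= Rpower 4 (- ((alpha - 1) * INR (Nat.min (k1 + 1) (k2 + 1))))
     * Rpower (INR (k1 + k2 + n + 1)) (alpha * INR (k1 + k2 + n + 1)).
Proof.
  intros Ha Hn Hi Hin.
  set (a := (k1 + n + 1 - i)%nat). set (b := (k2 + i)%nat).
  set (m := Nat.min (k1 + 1) (k2 + 1)).
  assert (Hab: (k1 + k2 + n + 1 = a + b)%nat) by (unfold a, b; lia).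
  rewrite Hab.
  assert (Ha0 : 0 < INR a) by (apply lt_0_INR; unfold a; lia).
  assert (Hb0 : 0 < INR b) by (apply lt_0_INR; unfold b; lia).
  assert (HN0 : 0 < INR (a + b)) by (apply lt_0_INR; unfold a, b; lia).
  assert (HCk : INR (fact (k1 + k2)) / (INR (fact k1) * INR (fact k2)) = C (k1 + k2) k1).
  { unfold C. replace (k1 + k2 - k1)%nat with k2 by lia. reflexivity. }
  rewrite HCk.
  rewrite !(Rmult_comm alpha (INR _)).
  rewrite <- !(Rpower_mult (INR _) (INR _) alpha).
  rewrite !Rpower_pow by assumption.
  rewrite Rmult_assoc, Rpower_mult_distr by (apply pow_lt; assumption).
  replace (- ((alpha - 1) * INR m)) with (INR m * (- (alpha - 1))) by ring.
  rewrite <- Rpower_mult, Rpower_pow by lra.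
  apply real_main.
  - apply C_pos.
  - apply Rmult_lt_0_compat; apply pow_lt; assumption.
  - apply pow_lt; lra.
  - exact Ha.
  - eapply Rle_trans; [|apply (bin_bound a b)].
    rewrite <- Rmult_assoc. apply Rmult_le_compat_r.
    + apply pow_le; lra.
    + apply Rmult_le_compat_r. apply pow_le; lra.
      replace (a + b)%nat with (k1 + k2 + (n + 1 - i) + i)%nat by (unfold a, b; lia).
      replace (C (k1 + k2 + (n + 1 - i) + i) a) with (C (k1 + k2 + (n + 1 - i) + i) (k1 + (n + 1 - i))) by (f_equal; unfold a; lia).
      apply C_mono. lia.
  - apply four_bound; unfold m, a, b; lia.
Qed.
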